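(* Consider the multi-class loss system described in the context, with $C$ classes, arrival rates $\boldsymbol{\lambda}=(\lambda_1,\dots,\lambda_C)$, bandwidth vector $\mathbf{h}=(h_1,\dots,h_C)$, transmission-duration vector $\mathbf{s}=(s_1,\dots,s_C)$ and total bandwidth $W$. Fix a positive integer $q$ and an index $i\in\{1,\dots,C\}$, and define $$\mathbf{h}':=(h_1,\dots,h_{i-1},h_i/q,h_{i+1},\dots,h_C),\qquad \mathbf{s}':=(s_1,\dots,s_{i-1},q s_i,s_{i+1},\dots,s_C).$$ If $\rho_i:=\lambda_i s_i<1$, then for every class $c\in\{1,\dots,C\}$ there exists $\tilde W_c$ such that for all $W>\tilde W_c$, $$P^{B}_c(\mathbf{h},\mathbf{s},\boldsymbol{\lambda},W)\;\ge\;P^{B}_c(\mathbf{h}',\mathbf{s}',\boldsymbol{\lambda},W).$$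
   Context: Multi-class loss system (one-shot transmission model with immediate scheduling): there are $C$ classes of packets. Class-$c$ packets arrive according to independent Poisson processes of rate $\lambda_c>0$. An admitted class-$c$ packet occupies bandwidth $h_c>0$ for a deterministic duration $s_c>0$ and then leaves. The total available bandwidth is $W>0$. Let $N_{c'}(t)$ be the number of class-$c'$ packets in transmission at time $t$. A class-$c$ packet arriving at time $t$ is admitted immediately if $h_c+\sum_{c'=1}^C h_{c'}N_{c'}(t)\le W$; otherwise it is blocked (lost). Admitted packets are never preempted. Write $\rho_c:=\lambda_c s_c$. The stationary distribution of $\mathbf{N}=(N_1,\dots,N_C)$ is the truncated product form $\pi(\mathbf{n})=G\prod_{c=1}^C \rho_c^{n_c}/n_c!$ on $\mathcal{S}=\{\mathbf{n}\in\mathbb{Z}_+^C:\sum_c h_c n_c\le W\}$, with $G$ the normalizing constant. The blocking probability of class $c$, $P^{B}_c(\mathbf{h},\mathbf{s},\boldsymbol{\lambda},W)$, is the probability that a typical class-$c$ arrival is blocked, i.e. (by PASTA) $$P^{B}_c(\mathbf{h},\mathbf{s},\boldsymbol{\lambda},W)=\frac{\sum_{\mathbf{n}\in\mathcal{S}:\,h_c+\sum_{c'}h_{c'}n_{c'}>W}\prod_{c'}\rho_{c'}^{n_{c'}}/n_{c'}!}{\sum_{\mathbf{n}\in\mathcal{S}}\prod_{c'}\rho_{c'}^{n_{c'}}/n_{c'}!}.$$ For the primed parameters $(\mathbf{h}',\mathbf{s}')$, the same definition is used with $h_i$ replaced by $h_i/q$ and $\rho_i$ replaced by $\lambda_i q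 s_i=q\rho_i$. *)

(* Defs.v *)
From HB Require Import structures.
From mathcomp Require Import all_boot all_order all_algebra.
From mathcomp Require Import reals.
Set Implicit Arguments. Unset Strict Implicit. Unset Printing Implicit Defensive.
Import Order.TTheory GRing.Theory Num.Theory.
Local Open Scope ring_scope.

Section LossSystem.
Variable R : realType.
Variable C : nat.

Definition occupancy (h : 'I_C -> R) (n : 'I_C -> nat) : R :=
  \sum_(c < C) h c * (n c)%:R.

Definition pf_weight (rho : 'I_C -> R) (n : 'I_C -> nat) : R :=
  \prod_(c < C) (rho c ^+ n c / (n c)`!%:R).

(* A uniform bound on every coordinate of a state in
   S = {n : sum_c h_c n_c <= W}: when all h_c > 0 we have
   n_c <= W / h_c < truncn (W/h_c) + 1 <= state_bound h W + 1.
   So enumerating {ffun 'I_C -> 'I_(state_bound h W).+1} covers all of S. *)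
Definition state_bound (h : 'I_C -> R) (W : R) : nat :=
  \sum_(c < C) Num.truncn (W / h c).

Definition state (h : 'I_C -> R) (W : R) := {ffun 'I_C -> 'I_(state_bound h W).+1}.

Definition stv (h : 'I_C -> R) (W : R) (n : state h W) : 'I_C -> nat :=
  fun c => nat_of_ord (n c).

(* Blocking probability of class c (PASTA):
   P^B_c = sum_{n in S, h_c + sum h n > W} w(n) / sum_{n in S} w(n),
   with rho_c = lam_c * s_c. *)
Definition blocking_prob (h s lam : 'I_C -> R) (W : R) (c : 'I_C) : R :=
  let rho := fun j => lam j * s j in
  (\sum_(n : state h W | (occupancy h (stv n) <= W)
                           && (W < h c + occupancy h (stv n)))
      pf_weight rho (stv n))
  / (\sum_(n : state h W | occupancy h (stv n) <= W) pf_weight rho (stv n)).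

Definition split_h (h : 'I_C -> R) (i : 'I_C) (q : nat) : 'I_C -> R :=
  fun j => if j == i then h j / q%:R else h j.
Definition stretch_s (s : 'I_C -> R) (i : 'I_C) (q : nat) : 'I_C -> R :=
  fun j => if j == i then q%:R * s j else s j.

End LossSystem.

(* Main.v *)
Require Import Defs.
From HB Require Import structures.
From mathcomp Require Import all_boot all_order all_algebra.
From mathcomp Require Import reals.
From mathcomp Require Import all_classical all_reals all_analysis.
From mathcomp Require Import ring lra.
Import Order.TTheory GRing.Theory Num.Theory.
Import numFieldNormedType.Exports.
Local Open Scope ring_scope.

Section H.
Variable R : realType.

Lemma psum_le_expR (x : R) (N : nat) : 0 <= x ->
  \sum_(m < N) x ^+ m / (m`!)%:R <= expR x.
Proof.
move=> x0.
have -> : \sum_(m < N) x ^+ m / (m`!)%:R = series (exp_coeff x) N.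
  by rewrite /series /= -(big_mkord xpredT (fun m => x ^+ m / (m`!)%:R)).
rewrite /expR; apply: nondecreasing_cvgn_le; last exact: is_cvg_series_exp_coeff.
apply: (@nondecreasing_series _ _ xpredT 0) => n _ _.
by rewrite /exp_coeff /= divr_ge0 // exprn_ge0.
Qed.

Variable C : nat.

Lemma pf_tilt (h rho : 'I_C -> R) t n :
  pf_weight (fun k => rho k * expR (t * h k)) n = expR (t * occupancy h n) * pf_weight rho n.
Proof.
rewrite /pf_weight /occupancy mulr_sumr expR_sum -big_split /=.
apply: eq_bigr => k _; rewrite mulrA expRM_natr exprMn; ring.
Qed.

Lemma pf_weight_ge0 (rho : 'I_C -> R) n : (forall k, 0 <= rho k) -> 0 <= pf_weight rho n.
Proof.
move=> r0; rewrite /pf_weight; apply: prodr_ge0 => k _.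
by rewrite divr_ge0 // exprn_ge0.
Qed.

Lemma chernoff (h rho : 'I_C -> R) W t (P : pred (state h W)) :
  (forall k, 0 <= rho k) ->
  \sum_(n : state h W | P n) pf_weight rho (stv n) * expR (t * occupancy h (stv n))
    <= expR (\sum_k rho k * expR (t * h k)).
Proof.
move=> r0.
have l0 : forall k, 0 <= rho k * expR (t * h k).
  by move=> k; rewrite mulr_ge0 // expR_ge0.
under eq_bigr do rewrite mulrC -pf_tilt.
apply: (@le_trans _ _ (\sum_(n : state h W) pf_weight (fun k => rho k * expR (t * h k)) (stv n))).
  rewrite [X in _ <= X](bigID P) /= lerDl sumr_ge0 // => n _.
  exact: pf_weight_ge0.
rewrite /pf_weight /stv /state.
rewrite -(bigA_distr_bigA (fun k (m : 'I_(state_bound h W).+1) =>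
   (rho k * expR (t * h k)) ^+ m / (m`!)%:R)) /=.
rewrite expR_sum; apply: ler_prod => k _; apply/andP; split.
  by apply: sumr_ge0 => m _; rewrite divr_ge0 // exprn_ge0.
exact: psum_le_expR.
Qed.

Lemma occ_ge0 (h : 'I_C -> R) n : (forall k, 0 < h k) -> 0 <= occupancy h n.
Proof. by move=> hp; apply: sumr_ge0 => k _; rewrite mulr_ge0 // ltW. Qed.

Lemma occ_term (h : 'I_C -> R) n k : (forall k, 0 < h k) -> h k * (n k)%:R <= occupancy h n.
Proof.
move=> hp; rewrite /occupancy (bigD1 k) //= lerDl sumr_ge0 // => j _.
by rewrite mulr_ge0 // ltW.
Qed.

Lemma den_ge1 (h rho : 'I_C -> R) W : 0 <= W -> (forall k, 0 < h k) -> (forall k, 0 <= rho k) ->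
  1 <= \sum_(n : state h W | occupancy h (stv n) <= W) pf_weight rho (stv n).
Proof.
move=> W0 hp r0.
pose z : state h W := [ffun _ => ord0].
have sz : stv z = fun _ => 0%N by apply: funext => k; rewrite /stv ffunE.
have o0 : occupancy h (stv z) = 0 by rewrite sz /occupancy big1 // => k _; rewrite mulr0.
rewrite (bigD1 z) /=; last by rewrite o0.
have -> : pf_weight rho (stv z) = 1.
  by rewrite sz /pf_weight big1 // => k _; rewrite expr0 divr1.
by rewrite lerDl sumr_ge0 // => n _; exact: pf_weight_ge0.
Qed.

Lemma den_le (h rho : 'I_C -> R) W : (forall k, 0 <= rho k) ->
  \sum_(n : state h W | occupancy h (stv n) <= W) pf_weight rho (stv n) <= expR (\sum_k rho k).
Proof.
move=> r0.
rewrite (_ : \sum_k rho k = \sum_k rho k * expR (0 * h k)); last first.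
  by apply: eq_bigr => k _; rewrite mul0r expR0 mulr1.
apply: le_trans (@chernoff h rho W 0 (fun n : state h W => occupancy h (stv n) <= W) r0).
by rewrite le_eqVlt; apply/orP; left; apply/eqP; apply: eq_bigr => n _; rewrite mul0r expR0 mulr1.
Qed.

Lemma num_upper (h rho : 'I_C -> R) W c t : 0 <= t -> (forall k, 0 <= rho k) ->
  \sum_(n : state h W | (occupancy h (stv n) <= W) && (W < h c + occupancy h (stv n)))
      pf_weight rho (stv n)
  <= expR (t * (h c - W) + \sum_k rho k * expR (t * h k)).
Proof.
move=> t0 r0.
apply: (@le_trans _ _ (\sum_(n : state h W | (occupancy h (stv n) <= W) && (W < h c + occupancy h (stv n)))
    expR (t * (h c - W)) * (pf_weight rho (stv n) * expR (t * occupancy h (stv n))))).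
  apply: ler_sum => n /andP[_ hw].
  rewrite mulrCA -expRD -[X in X <= _]mulr1 ler_wpM2l //; first exact: pf_weight_ge0.
  rewrite -expR0 ler_expR -mulrDr mulr_ge0 //; lra.
by rewrite -mulr_sumr expRD ler_wpM2l ?expR_ge0 // chernoff.
Qed.

Lemma num_lower (h rho : 'I_C -> R) W c (n : 'I_C -> nat) :
  (forall k, 0 < h k) -> (forall k, 0 <= rho k) ->
  occupancy h n <= W -> W < h c + occupancy h n ->
  pf_weight rho n <=
  \sum_(z : state h W | (occupancy h (stv z) <= W) && (W < h c + occupancy h (stv z)))
      pf_weight rho (stv z).
Proof.
move=> hp r0 oW Wo.
have bnd : forall k, (n k < (state_bound h W).+1)%N.
  move=> k; rewrite ltnS; apply: (@leq_trans (Num.truncn (W / h k))).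
    rewrite truncn_ge_nat; last by apply: divr_ge0; [apply: le_trans oW; apply: occ_ge0 | apply: ltW].
    by rewrite ler_pdivlMr // mulrC (le_trans (@occ_term h n k hp)).
  by rewrite /state_bound (bigD1 k) //= leq_addr.
pose z : state h W := [ffun k => Ordinal (bnd k)].
have sz : stv z = n by apply: funext => k; rewrite /stv ffunE.
rewrite (bigD1 z) /=; last by rewrite sz oW Wo.
by rewrite sz lerDl sumr_ge0 // => y _; exact: pf_weight_ge0.
Qed.
End H.

Section P.
Variable R : realType.

Lemma e_pow (m : nat) : expR 1 * (m%:R : R) ^+ m.+1 <= (m.+1)%:R ^+ m.+1.
Proof.
set b : R := (m.+1)%:R.
have b0 : 0 < b by rewrite ltr0n.
have ab : (m%:R : R) = (m%:R / b) * b by rewrite divfK // gt_eqF.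
rewrite [X in _ * X ^+ _]ab exprMn mulrA -[X in _ <= X]mul1r ler_wpM2r //.
  by rewrite exprn_ge0 // ltW.
have h1 : m%:R / b <= expR (- b^-1).
  apply: le_trans (expR_ge1Dx _).
  have mb : (m%:R:R) = b - 1 by rewrite /b -natr1 addrK.
  by rewrite mb mulrBl divff ?gt_eqF // mul1r.
have h2 : (m%:R / b) ^+ m.+1 <= expR (- b^-1) ^+ m.+1.
  apply: lerXn2r => //; rewrite ?nnegrE ?expR_ge0 //.
  by rewrite divr_ge0 // ltW.
rewrite -expRM_natr -/b mulNr mulVf ?gt_eqF // in h2.
apply: le_trans (ler_wpM2l (expR_ge0 1) h2) _.
by rewrite -expRD subrr expR0.
Qed.

Lemma fact_upper (N : nat) : ((N.+1)`!)%:R * expR ((N.+1)%:R : R) <= expR 1 * (N.+1)%:R ^+ N.+2.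
Proof.
elim: N => [|N IH].
  by rewrite factS fact0 muln1 mul1r expr1n mulr1.
rewrite factS natrM.
have e0 : (0:R) < expR 1 := expR_gt0 1.
have h := e_pow N.+1.
have eb : expR ((N.+2)%:R : R) = expR (N.+1)%:R * expR 1 by rewrite -expRD natr1.
rewrite eb.
set a : R := (N.+1)%:R in IH h *.
set b : R := (N.+2)%:R in h *.
set F : R := ((N.+1)`!)%:R in IH *.
set X : R := expR a in IH *.
have -> : (b * F * (X * expR 1)) = b * expR 1 * (F * X) by ring.
apply: (@le_trans _ _ (b * expR 1 * (expR 1 * a ^+ N.+2))).
  by rewrite ler_wpM2l // mulr_ge0 // ?ltW // ltr0n.
have -> : b * expR 1 * (expR 1 * a ^+ N.+2) = expR 1 * (b * (expR 1 * a ^+ N.+2)) by ring.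
apply: ler_wpM2l; first exact: ltW.
rewrite [Y in _ <= Y]exprS; apply: ler_wpM2l => //; rewrite /b ler0n.
Qed.

Lemma poisson_lb (r B lam : R) (n : nat) : 0 < r -> 0 <= B -> r <= lam ->
  lam - B <= n%:R -> n%:R <= lam + B ->
  expR lam * expR (-(2 * B + B ^+ 2 / r + 1)) / (n.+1)%:R <= lam ^+ n / (n`!)%:R.
Proof.
move=> r0 B0 rl h1 h2.
have l0 : 0 < lam by apply: lt_le_trans rl.
have Br0 : 0 <= B ^+ 2 / r by apply: divr_ge0; [exact: sqr_ge0 | exact: ltW].
case: n h1 h2 => [|N] h1 h2.
  rewrite expr0 fact0 !divr1 -expRD.
  rewrite mulr0n in h1.
  have : lam + -(2 * B + B ^+ 2 / r + 1) <= 0 by lra.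
  by move=> H; rewrite -[X in _ <= X]expR0 ler_expR.
set nn : R := (N.+1)%:R in h1 h2 *.
have nn0 : 0 < nn by rewrite ltr0n.
set F : R := ((N.+1)`!)%:R.
have F0 : 0 < F by rewrite ltr0n fact_gt0.
set P : R := lam ^+ N.+1.
have P0 : 0 <= P by rewrite exprn_ge0 // ltW.
set Q : R := nn ^+ N.+1.
have f1 : F * expR nn <= expR 1 * nn ^+ N.+2 := fact_upper N.
have f2 : Q <= expR (B + B ^+ 2 / r) * P.
  have e1 : nn / lam <= expR (nn / lam - 1).
    by apply: le_trans (expR_ge1Dx _); rewrite addrC subrK.
  have e2 : (nn / lam) ^+ N.+1 <= expR ((nn / lam - 1) * nn).
    rewrite expRM_natr; apply: lerXn2r => //; rewrite ?nnegrE ?expR_ge0 //.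
    by rewrite divr_ge0 // ltW.
  have e3 : (nn / lam - 1) * nn <= B + B ^+ 2 / r.
    have -> : (nn / lam - 1) * nn = (nn - lam) * nn / lam.
      by field; rewrite gt_eqF.
    apply: (@le_trans _ _ ((B * lam + B ^+ 2) / lam)).
      rewrite ler_pM2r ?invr_gt0 //.
      have [hl|hl] := leP nn lam.
        by nra.
      by nra.
    have -> : (B * lam + B ^+ 2) / lam = B + B ^+ 2 / lam by field; rewrite gt_eqF.
    rewrite lerD2l; apply: ler_wpM2l; first exact: sqr_ge0.
    by rewrite lef_pV2 ?posrE.
  have -> : Q = (nn / lam) ^+ N.+1 * P by rewrite /Q /P -exprMn divfK // gt_eqF.
  apply: ler_wpM2r => //; apply: le_trans e2 _; by rewrite ler_expR.
have f3 : expR lam <= expR nn * expR B by rewrite -expRD ler_expR; lra.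
set K := expR (-(2 * B + B ^+ 2 / r + 1)).
have K0 : 0 <= K by exact: expR_ge0.
rewrite ler_pdivrMr ?ltr0n // mulrAC ler_pdivlMr //.
apply: (@le_trans _ _ (expR nn * expR B * K * F)).
  by apply: ler_wpM2r; [exact: ltW | apply: ler_wpM2r].
have -> : expR nn * expR B * K * F = expR B * K * (F * expR nn) by ring.
apply: (@le_trans _ _ (expR B * K * (expR 1 * nn ^+ N.+2))).
  by rewrite ler_wpM2l // mulr_ge0 // expR_ge0.
have -> : expR B * K * (expR 1 * nn ^+ N.+2) = expR B * K * expR 1 * nn * Q.
  by rewrite /Q exprS; ring.
apply: (@le_trans _ _ (expR B * K * expR 1 * nn * (expR (B + B ^+ 2 / r) * P))).
  by rewrite ler_wpM2l // !mulr_ge0 ?expR_ge0 // ltW.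
have -> : expR B * K * expR 1 * nn * (expR (B + B ^+ 2 / r) * P)
   = expR (B + (-(2 * B + B ^+ 2 / r + 1)) + 1 + (B + B ^+ 2 / r)) * nn * P.
  by rewrite !expRD /K; ring.
have -> : B + (-(2 * B + B ^+ 2 / r + 1)) + 1 + (B + B ^+ 2 / r) = 0 by ring.
rewrite expR0 mul1r mulrC ler_wpM2l // -natr1 -/nn lerDl //.
Qed.
End P.

Section X.
Variable R : realType.
Variable C : nat.
Lemma exmax (h : 'I_C -> R) (i : 'I_C) : exists j, forall k, h k <= h j.
Proof.
case: (arg_maxP h (isT : predT i)) => j _ hj; exists j => k; exact: hj.
Qed.
Lemma contf (g a : 'I_C -> R) : continuous (fun t : R => \sum_k a k * expR (t * g k)).
Proof.
apply: continuous_big => [|k _].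
  exact: add_continuous.
move=> x.
apply: cvgM; first exact: cvg_cst.
apply: continuous_comp; last exact: continuous_expR.
apply: cvgM; [exact: cvg_id | exact: cvg_cst].
Qed.

Lemma final_combine (N' D' N D Z : R) : 0 <= N' -> 1 <= D' -> 0 < D -> D <= Z ->
  N' * Z <= N -> N' / D' <= N / D.
Proof.
move=> N'0 D'1 D0 DZ h.
have Z0 : 0 < Z by apply: lt_le_trans DZ.
have N0 : 0 <= N by apply: le_trans h; rewrite mulr_ge0 // ltW.
apply: (@le_trans _ _ N').
  by rewrite ler_pdivrMr ?(lt_le_trans ltr01) // ler_peMr.
apply: (@le_trans _ _ (N / Z)).
  by rewrite ler_pdivlMr.
by apply: ler_wpM2l => //; rewrite lef_pV2 ?posrE.
Qed.
End X.


Theorem theorem1 (R : realType) (C : nat) (lam h s : 'I_C -> R)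
  (hlam : forall c, 0 < lam c) (hh : forall c, 0 < h c) (hs : forall c, 0 < s c)
  (q : nat) (hq : (0 < q)%N) (i : 'I_C) (hrho : lam i * s i < 1) :
  forall c : 'I_C, exists Wt : R, forall W : R, Wt < W ->
    blocking_prob (split_h h i q) (stretch_s s i q) lam W c
      <= blocking_prob h s lam W c.
Proof.
move=> c.
have [q1|q1] := eqVneq q 1%N.
  subst q.
  have eh : split_h h i 1 = h.
    by apply: funext => k; rewrite /split_h; case: eqP => // _; rewrite divr1.
  have es : stretch_s s i 1 = s.
    by apply: funext => k; rewrite /stretch_s; case: eqP => // _; rewrite mul1r.
  by rewrite eh es; exists 0 => W _.
have q2 : (1 < q)%N by case: q hq q1 => [|[|q']].
pose rho k := lam k * s k.
have rp : forall k, 0 < rho k by move=> k; rewrite mulr_gt0.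
pose h' := split_h h i q.
pose rho' k := lam k * stretch_s s i q k.
have qR : (0 : R) < q%:R by rewrite ltr0n.
have hp' : forall k, 0 < h' k.
  by move=> k; rewrite /h' /split_h; case: eqP => _; rewrite ?divr_gt0.
have rp' : forall k, 0 < rho' k.
  by move=> k; rewrite /rho' /stretch_s; case: eqP => _; rewrite ?mulr_gt0.
have [j hj] := @exmax R C h i.
set H := h j.
have H0 : 0 < H := hh j.
pose S0 := \sum_k h k * rho k.
have S00 : 0 < S0.
  rewrite /S0 (bigD1 j) //=.
  have t1 : 0 < h j * rho j by rewrite mulr_gt0.
  have t2 : 0 <= \sum_(k | k != j) h k * rho k.
    by apply: sumr_ge0 => k _; rewrite mulr_ge0 // ltW.
  lra.
pose B := 1 + (\sum_k h k) / H + H / h c.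
have B1 : 1 <= B.
  have t1 : 0 <= (\sum_k h k) / H.
    by apply: divr_ge0; [apply: sumr_ge0 => k _; exact: ltW | exact: ltW].
  have t2 : 0 <= H / h c by apply: divr_ge0; apply: ltW.
  rewrite /B; lra.
pose K0 k := expR (- (2 * B + B ^+ 2 / rho k + 1)).
pose E k := (1 / h k + 1) / K0 k.
have E0 : forall k, 0 < E k.
  by move=> k; rewrite /E divr_gt0 ?expR_gt0 // addr_gt0 // divr_gt0.
pose K2 := expR (\sum_k rho k) * (\prod_k E k) / (H * rho j).
have K20 : 0 < K2.
  by rewrite /K2 divr_gt0 ?mulr_gt0 ?expR_gt0 // prodr_gt0.
pose g := q%:R * H / h i.
have g0 : 0 < g by rewrite /g divr_gt0 ?mulr_gt0.
pose a := ln (K2 * S0 ^+ C.+1).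
pose b := (C.+1)%:R * g.
have b0 : 0 <= b by rewrite /b mulr_ge0 // ltW.
pose U0 := q%:R + 1 + (`|a| + b) / rho i.
have U01 : 1 <= U0.
  have t1 : 0 <= (`|a| + b) / rho i by rewrite divr_ge0 ?addr_ge0 // ltW.
  have t2 : (0:R) <= q%:R by rewrite ler0n.
  rewrite /U0; lra.
exists (S0 * expR (g * U0) + 1) => W WtW.
have eg : 1 <= expR (g * U0).
  by rewrite -expR0 ler_expR mulr_ge0 // ltW // (lt_le_trans ltr01).
have W1 : 1 < W.
  have : 0 <= S0 * expR (g * U0) by rewrite mulr_ge0 ?expR_ge0 // ltW.
  lra.
have WS : S0 < W.
  have : S0 <= S0 * expR (g * U0) by rewrite -[X in X <= _]mulr1 ler_wpM2l // ltW.
  lra.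
pose f t := \sum_k (h k * rho k) * expR (t * h k).
have f0 : f 0 = S0.
  by rewrite /f /S0; apply: eq_bigr => k _; rewrite mul0r expR0 mulr1.
pose tb := W / (h j * rho j * H).
have tb0 : 0 <= tb by rewrite /tb divr_ge0 ?mulr_ge0 ?ltW // (lt_trans _ WS).
have fb0 : W <= f tb.
  rewrite /f (bigD1 j) //=.
  have t2 : 0 <= \sum_(k | k != j) h k * rho k * expR (tb * h k).
    by apply: sumr_ge0 => k _; rewrite !mulr_ge0 ?expR_ge0 // ltW.
  have t3 : h j * rho j * (1 + tb * h j) <= h j * rho j * expR (tb * h j).
    by apply: ler_wpM2l; [rewrite mulr_ge0 // ltW | exact: expR_ge1Dx].
  have t4 : h j * rho j * (1 + tb * h j) = h j * rho j + W.
    by rewrite /tb -/H; field; rewrite !mulf_neq0 ?gt_eqF.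
  have t5 : 0 < h j * rho j by rewrite mulr_gt0.
  lra.
have [th thI fth] : exists2 t, t \in `[0, tb] & f t = W.
  apply: IVT => //.
    apply: continuous_subspaceT; exact: contf.
  rewrite f0; apply/andP; split.
    by rewrite ge_min ltW.
  by rewrite le_max fb0 orbT.
have th0 : 0 <= th by move: thI; rewrite in_itv /= => /andP[].
pose la k := rho k * expR (th * h k).
have lage : forall k, rho k <= la k.
  move=> k; rewrite /la -[X in X <= _]mulr1; apply: ler_wpM2l; first exact: ltW.
  by rewrite -expR0 ler_expR mulr_ge0 // ltW.
have la0 : forall k, 0 < la k by move=> k; apply: lt_le_trans (lage k).
have fW : \sum_k h k * la k = W.
  by rewrite -fth /f; apply: eq_bigr => k _; rewrite /la mulrA.
have fWs : H * la j + \sum_(k | k != j) h k * la k = W by rewrite -fW [in RHS](bigD1 j).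
have sj0 : 0 <= \sum_(k | k != j) h k * la k.
  by apply: sumr_ge0 => k _; rewrite mulr_ge0 // ltW.
have HlW : H * la j <= W by lra.
have eH : H * rho j * expR (th * H) <= W by rewrite -mulrA.
have WeH : W <= S0 * expR (th * H).
  rewrite -fth /f /S0 mulr_suml; apply: ler_sum => k _.
  apply: ler_wpM2l; first by rewrite mulr_ge0 // ltW.
  by rewrite ler_expR; apply: ler_wpM2l.
pose tr k := Num.truncn (la k).
have trI : forall k, (tr k)%:R <= la k /\ la k < (tr k)%:R + 1.
  move=> k; have /andP[t1 t2] := truncn_itv (ltW (la0 k)).
  by split => //; rewrite natr1.
pose y := \sum_(k | k != j) h k * (tr k)%:R.
have yle : y <= \sum_(k | k != j) h k * la k.
  apply: ler_sum => k _; apply: ler_wpM2l; [exact: ltW | exact: (proj1 (trI k))].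
have yge : \sum_(k | k != j) h k * la k <= y + \sum_k h k.
  apply: (@le_trans _ _ (y + \sum_(k | k != j) h k)).
    rewrite /y -big_split /=; apply: ler_sum => k _.
    rewrite -[X in _ + X]mulr1 -mulrDr; apply: ler_wpM2l; first exact: ltW.
    exact: ltW (proj2 (trI k)).
  rewrite lerD2l [X in _ <= X](bigD1 j) //= lerDr; exact: ltW.
pose X := (W - y) / H.
have Xge : la j <= X by rewrite /X ler_pdivlMr // mulrC; lra.
have Xle : X <= la j + (\sum_k h k) / H.
  rewrite /X ler_pdivrMr // mulrDl divfK ?gt_eqF // mulrC; lra.
have HX : H * X = W - y by rewrite /X mulrC divfK ?gt_eqF.
pose nj := Num.truncn X.
have njI : (nj%:R <= X) /\ (X < nj%:R + 1).
  have /andP[t1 t2] := truncn_itv (le_trans (ltW (la0 j)) Xge).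
  by split => //; rewrite natr1.
pose n0 k := if k == j then nj else tr k.
pose o0 := y + H * nj%:R.
have occ0 : occupancy h n0 = o0.
  rewrite /occupancy (bigD1 j) //= /n0 eqxx addrC /o0 /y; congr (_ + _).
  by apply: eq_bigr => k /negbTE ->.
have o0le : o0 <= W.
  have : H * nj%:R <= H * X by apply: ler_wpM2l; [exact: ltW | exact: (proj1 njI)].
  rewrite HX /o0; lra.
have o0gt : W - H < o0.
  have : H * X < H * (nj%:R + 1) by rewrite ltr_pM2l //; exact: (proj2 njI).
  rewrite HX /o0 mulrDr mulr1; lra.
pose m := Num.truncn ((W - o0) / h c).
have mI : (m%:R <= (W - o0) / h c) /\ ((W - o0) / h c < m%:R + 1).
  have Wo0 : 0 <= W - o0 by lra.
  have /andP[t1 t2] := truncn_itv (divr_ge0 Wo0 (ltW (hh c))).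
  by split => //; rewrite natr1.
have hcm : h c * ((W - o0) / h c) = W - o0 by rewrite mulrC divfK ?gt_eqF.
pose n k := (n0 k + (if k == c then m else 0))%N.
have occn : occupancy h n = o0 + h c * m%:R.
  rewrite /occupancy.
  under eq_bigr do rewrite natrD mulrDr.
  rewrite big_split /= -/(occupancy h n0) occ0; congr (_ + _).
  rewrite (bigD1 c) //= eqxx big1 ?addr0 // => k /negbTE ->.
  by rewrite mulr0.
have win1 : occupancy h n <= W.
  have : h c * m%:R <= h c * ((W - o0) / h c) by apply: ler_wpM2l; [exact: ltW | exact: (proj1 mI)].
  rewrite hcm occn; lra.
have win2 : W < h c + occupancy h n.
  have : h c * ((W - o0) / h c) < h c * (m%:R + 1) by rewrite ltr_pM2l //; exact: (proj2 mI).
  rewrite hcm occn mulrDr mulr1; lra.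
have T0 : 0 <= (\sum_k h k) / H.
  by apply: divr_ge0; [apply: sumr_ge0 => k _; exact: ltW | exact: ltW].
have mH : m%:R <= H / h c.
  apply: le_trans (proj1 mI) _; rewrite ler_pM2r ?invr_gt0 //; lra.
have dev : forall k, la k - B <= (n k)%:R /\ (n k)%:R <= la k + B.
  move=> k.
  have [n0l n0u] : la k - 1 <= (n0 k)%:R /\ (n0 k)%:R <= la k + (\sum_k h k) / H.
    rewrite /n0; case: eqP => [->|_].
      by have := njI; split; lra.
    by have := trI k; split; lra.
  have [cl cu] : 0 <= ((if k == c then m else 0%N)%:R : R) /\
                 ((if k == c then m else 0%N)%:R : R) <= m%:R.
    by case: (k == c); rewrite ?lexx ?ler0n.
  rewrite /n natrD /B; split; lra.
have pb : forall k, expR (la k) * K0 k / ((n k).+1)%:R <= la k ^+ n k / ((n k)`!)%:R.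
  move=> k; have [d1 d2] := dev k.
  apply: poisson_lb; [exact: rp | lra | exact: lage | exact: d1 | exact: d2].
have nW : forall k, ((n k).+1)%:R <= W * (1 / h k + 1).
  move=> k; have := @occ_term R C h n k hh.
  rewrite -natr1 mulrDr mulr1 mul1r => t.
  have : (n k)%:R <= W / h k.
    rewrite ler_pdivlMr // mulrC; lra.
  lra.
have pb2 : forall k, expR (la k) / (W * E k) <= la k ^+ n k / ((n k)`!)%:R.
  move=> k; apply: le_trans (pb k).
  have K00 : 0 < K0 k by exact: expR_gt0.
  have -> : expR (la k) / (W * E k) = expR (la k) * K0 k / (W * (1 / h k + 1)).
    rewrite /E; field.
    have t1 := hh k.
    by rewrite !gt_eqF //; lra.
  apply: ler_wpM2l; first by rewrite mulr_ge0 ?expR_ge0 // ltW.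
  rewrite lef_pV2 ?posrE ?ltr0n //.
  by rewrite mulr_gt0 ?addr_gt0 ?divr_gt0 // (lt_trans ltr01).
have pfla : expR (\sum_k la k) / (W ^+ C * \prod_k E k) <= pf_weight la n.
  apply: (@le_trans _ _ (\prod_k (expR (la k) / (W * E k)))).
    have -> : \prod_k (expR (la k) / (W * E k)) = (\prod_k expR (la k)) / (\prod_k (W * E k)).
      exact: prodf_div.
    have -> : \prod_k (W * E k) = W ^+ C * \prod_k E k.
      by rewrite big_split /= (@prodr_const _ _ predT) card_ord.
    by rewrite expR_sum.
  rewrite /pf_weight; apply: ler_prod => k _; rewrite pb2 andbT.
  by rewrite divr_ge0 ?expR_ge0 // mulr_ge0 // ?ltW // (lt_trans ltr01).
have W0 : 0 <= W by lra.
have r0 : forall k, 0 <= rho k by move=> k; exact: ltW.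
have r0' : forall k, 0 <= rho' k by move=> k; exact: ltW.
have Nlow : expR (- (th * W)) * (expR (\sum_k la k) / (W ^+ C * \prod_k E k))
   <= \sum_(z : state h W | (occupancy h (stv z) <= W) && (W < h c + occupancy h (stv z)))
      pf_weight rho (stv z).
  apply: le_trans (@num_lower R C h rho W c n hh r0 win1 win2).
  have pt := @pf_tilt R C h rho th n.
  have -> : pf_weight rho n = expR (- (th * occupancy h n)) * pf_weight la n.
    by rewrite pt mulrA -expRD addNr expR0 mul1r.
  apply: ler_pM => //; first by rewrite mulr_ge0 ?expR_ge0 // invr_ge0 mulr_ge0 ?exprn_ge0 // ?prodr_ge0 // => k _; exact: ltW.
  rewrite ler_expR lerN2; apply: ler_wpM2l => //.
pose la' k := rho' k * expR (th * h' k).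
have Nup := @num_upper R C h' rho' W c th th0 r0'.
rewrite /blocking_prob /=.
apply: (@final_combine R _ _ _ _ (expR (\sum_k rho k))).
- by apply: sumr_ge0 => z _; exact: pf_weight_ge0.
- exact: (@den_ge1 R C h' rho' W W0 hp' r0').
- exact: (lt_le_trans ltr01 (@den_ge1 R C h rho W W0 hh r0)).
- exact: (@den_le R C h rho W r0).
apply: le_trans Nlow.
apply: le_trans (ler_wpM2r (expR_ge0 _) Nup) _.
have sla' : \sum_k rho' k * expR (th * h' k) = \sum_k la k - la i + la' i.
  rewrite (bigD1 i) //= [in RHS](bigD1 i) //=.
  have -> : \sum_(k | k != i) rho' k * expR (th * h' k) = \sum_(k | k != i) la k.
    apply: eq_bigr => k /negbTE ki.
    by rewrite /rho' /h' /la /rho /split_h /stretch_s ki.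
  rewrite /la'; lra.
pose v := th * h i / q%:R.
pose u := expR v.
have lai : la i = rho i * u ^+ q.
  rewrite /la /u -expRM_natr; congr (_ * expR _).
  by rewrite /v; field; rewrite gt_eqF.
have lai' : la' i = q%:R * rho i * u.
  rewrite /la' /rho' /h' /split_h /stretch_s eqxx /u /v /rho.
  rewrite (mulrA th (h i)); ring.
have thH : th * H = g * v.
  by rewrite /g /v; field; rewrite !gt_eqF.
have vU : U0 < v.
  have : S0 * expR (g * U0) < S0 * expR (g * v) by rewrite -thH; lra.
  by rewrite ltr_pM2l // ltr_expR ltr_pM2l.
have u1v : 1 + v <= u := expR_ge1Dx v.
have A6 : a + b * v <= la i - la' i.
  rewrite lai lai'.
  have u1 : 1 <= u by lra.
  have uq : u * u <= u ^+ q.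
    rewrite -(subnKC q2) exprD expr2 -[X in X <= _]mulr1.
    apply: ler_wpM2l; first by rewrite mulr_ge0 //; lra.
    exact: exprn_ege1.
  have e1 : (`|a| + b) / rho i * rho i = `|a| + b by rewrite divfK // gt_eqF.
  have e2 : rho i * (u - q%:R) >= `|a| + b.
    have : (`|a| + b) / rho i <= u - q%:R by rewrite /U0 in vU; lra.
    move=> /(ler_wpM2l (ltW (rp i))); rewrite mulrC e1; lra.
  have aa : a <= `|a| := ler_norm a.
  have e3 : rho i * u ^+ q - q%:R * rho i * u >= u * (rho i * (u - q%:R)).
    have : rho i * (u * u) <= rho i * u ^+ q by apply: ler_wpM2l => //; exact: r0.
    lra.
  have e4 : u * (`|a| + b) <= u * (rho i * (u - q%:R)).
    by apply: ler_wpM2l => //; lra.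
  have f1 : `|a| <= u * `|a| by rewrite ler_peMl.
  have f2 : b * v <= u * b by rewrite mulrC; apply: ler_wpM2r => //; lra.
  rewrite mulrDr in e4.
  lra.
have A1 : expR (th * h' c) <= W / (H * rho j).
  apply: (@le_trans _ _ (expR (th * H))).
    rewrite ler_expR; apply: ler_wpM2l => //.
    rewrite /h' /split_h; case: eqP => _; last exact: hj.
    apply: le_trans (hj c); rewrite ler_pdivrMr //.
    by rewrite ler_peMr ?ler1n ?ltW.
  by rewrite ler_pdivlMr ?mulr_gt0 // mulrC.
have A2 : expR (\sum_k rho k) * \prod_k E k = K2 * (H * rho j).
  by rewrite /K2 divfK // mulf_neq0 // gt_eqF.
have A3 : W ^+ C.+1 <= S0 ^+ C.+1 * expR ((C.+1)%:R * (th * H)).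
  rewrite expRM_natl -exprMn; apply: lerXn2r => //; rewrite nnegrE //.
  by rewrite mulr_ge0 ?expR_ge0 // ltW.
have A4 : K2 * S0 ^+ C.+1 = expR a.
  by rewrite /a lnK // posrE mulr_gt0 // exprn_gt0.
have key : expR (th * h' c) * expR (\sum_k rho k) * (W ^+ C * \prod_k E k) <= expR (la i - la' i).
  have -> : expR (th * h' c) * expR (\sum_k rho k) * (W ^+ C * \prod_k E k)
      = expR (th * h' c) * W ^+ C * (expR (\sum_k rho k) * \prod_k E k) by ring.
  rewrite A2.
  apply: (@le_trans _ _ (W / (H * rho j) * W ^+ C * (K2 * (H * rho j)))).
    apply: ler_wpM2r; first by apply: mulr_ge0; [exact: ltW | apply: mulr_ge0; exact: ltW].
    by apply: ler_wpM2r; [exact: exprn_ge0 W0 | exact: A1].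
  have -> : W / (H * rho j) * W ^+ C * (K2 * (H * rho j)) = K2 * W ^+ C.+1.
    by rewrite exprS; field; rewrite mulf_neq0 // gt_eqF.
  apply: (@le_trans _ _ (K2 * (S0 ^+ C.+1 * expR ((C.+1)%:R * (th * H))))).
    by apply: ler_wpM2l => //; exact: ltW.
  rewrite mulrA A4 -expRD ler_expR thH.
  by rewrite mulrA; exact: A6.
rewrite sla'.
set D := W ^+ C * \prod_k E k.
have D0 : 0 < D.
  by rewrite /D mulr_gt0 ?exprn_gt0 ?prodr_gt0 // (lt_trans ltr01 W1).
rewrite mulrA ler_pdivlMr //.
have -> : expR (th * (h' c - W) + (\sum_k la k - la i + la' i)) * expR (\sum_k rho k) * D
   = expR (- (th * W)) * expR (\sum_k la k) *
     (expR (la' i - la i) * (expR (th * h' c) * expR (\sum_k rho k) * D)).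
  have -> : th * (h' c - W) + (\sum_k la k - la i + la' i)
    = - (th * W) + \sum_k la k + (la' i - la i) + th * h' c by ring.
  rewrite !expRD; ring.
rewrite ger_pMr ?mulr_gt0 ?expR_gt0 //.
have e : expR (la' i - la i) = (expR (la i - la' i))^-1 by rewrite -expRN opprB.
by rewrite e ler_pdivrMl ?expR_gt0 // mulr1.
Qed.
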